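(* Let $d\ge 1$ and let $G_A=(V_A,E_A)$, $G_B=(V_B,E_B)$ be graphs that are universally rigid in $\mathbb{R}^d$. Let $\mathbf{p}^A$, $\mathbf{p}^B$ be configurations in general position in $\mathbb{R}^d$ of $G_A$, $G_B$, with $V_C=V_A\cap V_B$ a proper subset of both $V_A$ and $V_B$, $|V_C|\ge d+1$, and $\mathbf{p}^A_i=\mathbf{p}^B_i$ for $i\in V_C$. If both $G_A(\mathbf{p}^A)$ and $G_B(\mathbf{p}^B)$ have positive semidefinite stress matrices of nullity $d+1$, then their edge-reduced framework attachment (the framework with graph $(V_A\cup V_B,(E_A\cup E_B)\setminus F)$, where $F$ is the set of edges of $E_B\setminus E_A$ with both endpoints in $V_C$, and configuration $\mathbf{p}$ with $\mathbf{p}_i=\mathbf{p}^A_i$ for $i\in V_A$, $\mathbf{p}_i=\mathbf{p}^B_i$ for $i\in V_B$) also has a positive semidefinite stress matrix of nullity $d+1$.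
   Context: A framework $G(\mathbf{p})$ in $\mathbb{R}^d$ is a finite graph $G=(V,E)$ with points $\mathbf{p}_i\in\mathbb{R}^d$; general position means any $d+1$ distinct vertices have affinely independent points. $G(\mathbf{p})$ is universally rigid if for every $d'\ge d$, every configuration $\mathbf{q}$ in $\mathbb{R}^{d'}$ with $\|\mathbf{q}_i-\mathbf{q}_j\|=\|\mathbf{p}_i-\mathbf{p}_j\|$ for all edges satisfies the same equality for all pairs of vertices. A graph is universally rigid in $\mathbb{R}^d$ if every framework of it in general position in $\mathbb{R}^d$ is universally rigid. A stress matrix of $G(\mathbf{p})$ is a real $|V|\times|V|$ matrix $\Omega$ with: $\Omega_{ij}=\Omega_{ji}$; $\Omega_{ij}=0$ whenever $i\ne j$, $\{i,j\}\notin E$; $\sum_j\Omega_{ij}=0$ and $\sum_j\Omega_{ij}\mathbf{p}_j=0$ for all $i$. Nullity means $\dim\ker$. *)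

(* Defs.v *)
From HB Require Import structures.
From mathcomp Require Import all_boot all_order all_algebra.
From mathcomp Require Import reals.
Set Implicit Arguments. Unset Strict Implicit. Unset Printing Implicit Defensive.
Import Order.TTheory GRing.Theory Num.Theory.
Local Open Scope ring_scope.

(* Vertices live in an ambient finite type T.  A graph is a pair (V, E) with
   V : {set T} and E : {set {set T}} whose elements are 2-element subsets of V. *)
Definition is_graph (T : finType) (V : {set T}) (E : {set {set T}}) : Prop :=
  forall e, e \in E -> #|e| = 2%N /\ e \subset V.

Definition sqdist (R : realType) (k : nat) (u v : 'rV[R]_k) : R :=
  \sum_(l < k) (u 0 l - v 0 l) ^+ 2.

Definition aff_indep (R : realType) (T : finType) (d : nat)
  (p : T -> 'rV[R]_d) (S : {set T}) : Prop :=
  forall lam : T -> R,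
    \sum_(i in S) lam i = 0 -> \sum_(i in S) lam i *: p i = 0 ->
    forall i, i \in S -> lam i = 0.

Definition general_position (R : realType) (T : finType) (d : nat)
  (V : {set T}) (p : T -> 'rV[R]_d) : Prop :=
  forall S : {set T}, S \subset V -> #|S| = d.+1 -> aff_indep p S.

Definition univ_rigid_fw (R : realType) (T : finType) (d : nat)
  (V : {set T}) (E : {set {set T}}) (p : T -> 'rV[R]_d) : Prop :=
  forall (d' : nat) (q : T -> 'rV[R]_d'), (d <= d')%N ->
    (forall i j, i \in V -> j \in V -> [set i; j] \in E ->
       sqdist (q i) (q j) = sqdist (p i) (p j)) ->
    forall i j, i \in V -> j \in V -> sqdist (q i) (q j) = sqdist (p i) (p j).

Definition univ_rigid_graph (R : realType) (T : finType) (d : nat)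
  (V : {set T}) (E : {set {set T}}) : Prop :=
  forall p : T -> 'rV[R]_d, general_position V p -> univ_rigid_fw V E p.

(* the i-th vertex of V, i : 'I_#|V|  (rows/columns of a |V| x |V| matrix) *)
Definition vtx (T : finType) (V : {set T}) (i : 'I_#|V|) : T := enum_val i.

Definition stress_matrix (R : realType) (T : finType) (d : nat)
  (V : {set T}) (E : {set {set T}}) (p : T -> 'rV[R]_d)
  (Om : 'M[R]_#|V|) : Prop :=
  [/\ forall i j, Om i j = Om j i,
      forall i j, i != j -> [set vtx i; vtx j] \notin E -> Om i j = 0,
      forall i, \sum_j Om i j = 0 &
      forall i, \sum_j Om i j *: p (vtx j) = 0].

Definition psd (R : realType) (n : nat) (M : 'M[R]_n) : Prop :=
  forall x : 'cV[R]_n, 0 <= (x^T *m M *m x) 0 0.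

Definition nullity (R : realType) (n : nat) (M : 'M[R]_n) : nat :=
  \rank (kermx M).

Definition has_psd_stress_nullity (R : realType) (T : finType) (d : nat)
  (V : {set T}) (E : {set {set T}}) (p : T -> 'rV[R]_d) (k : nat) : Prop :=
  exists Om : 'M[R]_#|V|, [/\ @stress_matrix R T d V E p Om, psd Om & nullity Om = k].

Definition removed_edges (T : finType) (VA VB : {set T}) (EA EB : {set {set T}})
  : {set {set T}} :=
  [set e in EB | (e \notin EA) && (e \subset VA :&: VB)].

Definition attach_edges (T : finType) (VA VB : {set T}) (EA EB : {set {set T}})
  : {set {set T}} :=
  (EA :|: EB) :\: removed_edges VA VB EA EB.

Definition attach_config (R : realType) (T : finType) (d : nat) (VA : {set T})
  (pA pB : T -> 'rV[R]_d) : T -> 'rV[R]_d :=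
  fun i => if i \in VA then pA i else pB i.

(* Main.v *)
Require Import Defs.
From HB Require Import structures.
From mathcomp Require Import all_boot all_order all_algebra.
From mathcomp Require Import reals.
From mathcomp Require Import ring lra.
Import Order.TTheory GRing.Theory Num.Theory.
Local Open Scope ring_scope.
Set Implicit Arguments. Unset Strict Implicit. Unset Printing Implicit Defensive.

Definition bf (R : realType) (I : finType) (M : I -> I -> R) (u v : I -> R) : R :=
  \sum_i \sum_j u i * M i j * v j.

Lemma quad_le (R : realType) (a b c : R) : 0 <= c ->
  (forall s, 0 <= a + s * b * 2 + s ^+ 2 * c) -> b ^+ 2 <= a * c.
Proof.
move=> c0 H; have [ce|cn0] := eqVneq c 0.
  rewrite ce in H *.
  have [->|bn0] := eqVneq b 0; first by rewrite expr0n /= mulr0.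
  have := H (- (a + 1) / (b * 2)).
  have -> : - (a + 1) / (b * 2) * b * 2 = - (a + 1) by field.
  rewrite mulr0; lra.
have cp : 0 < c by rewrite lt_def cn0.
have hs : (- b / c) * c = - b by field.
have := H (- b / c); set s := - b / c => h.
have := mulr_ge0 (ltW cp) h.
have -> : c * (a + s * b * 2 + s ^+ 2 * c) = a * c + b * (s * c) * 2 + (s * c) ^+ 2
  by ring.
rewrite hs; lra.
Qed.

Lemma sum_delta (R : realType) (I : finType) (F : I -> R) (i : I) :
  \sum_j F j * (j == i)%:R = F i.
Proof.
rewrite (bigD1 i) //= eqxx mulr1 big1 ?addr0 // => j /negbTE ->.
by rewrite mulr0.
Qed.

Lemma bf_addl (R : realType) (I : finType) (M : I -> I -> R) u v w s :
  bf M (fun i => u i + s * v i) w = bf M u w + s * bf M v w.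
Proof.
rewrite /bf mulr_sumr -big_split; apply: eq_bigr => i _.
rewrite mulr_sumr -big_split; apply: eq_bigr => j _ /=; ring.
Qed.

Lemma bf_addr (R : realType) (I : finType) (M : I -> I -> R) u v w s :
  bf M w (fun i => u i + s * v i) = bf M w u + s * bf M w v.
Proof.
rewrite /bf mulr_sumr -big_split; apply: eq_bigr => i _.
rewrite mulr_sumr -big_split; apply: eq_bigr => j _ /=; ring.
Qed.

Lemma bf_sym (R : realType) (I : finType) (M : I -> I -> R) u v :
  (forall i j, M i j = M j i) -> bf M u v = bf M v u.
Proof.
move=> Ms; rewrite /bf exchange_big; apply: eq_bigr => i _.
by apply: eq_bigr => j _; rewrite Ms; ring.
Qed.

Lemma bf_cs (R : realType) (I : finType) (M : I -> I -> R) u v :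
  (forall i j, M i j = M j i) -> (forall x, 0 <= bf M x x) ->
  bf M u v ^+ 2 <= bf M u u * bf M v v.
Proof.
move=> Ms Mp; apply: quad_le => // s.
have := Mp (fun i => u i + s * v i).
rewrite bf_addl !bf_addr (bf_sym v u Ms).
suff -> : bf M u u + s * bf M u v * 2 + s ^+ 2 * bf M v v =
  bf M u u + s * bf M u v + s * (bf M u v + s * bf M v v) by [].
ring.
Qed.

Lemma bf_delta (R : realType) (I : finType) (M : I -> I -> R) u i :
  (forall i j, M i j = M j i) ->
  bf M u (fun j => (j == i)%:R) = \sum_j M i j * u j.
Proof.
move=> Ms; rewrite /bf; apply: eq_bigr => j _.
by rewrite sum_delta Ms mulrC.
Qed.

Lemma bf_ker (R : realType) (I : finType) (M : I -> I -> R) u :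
  (forall i j, M i j = M j i) -> (forall x, 0 <= bf M x x) ->
  bf M u u = 0 -> forall i, \sum_j M i j * u j = 0.
Proof.
move=> Ms Mp u0 i; have := bf_cs u (fun j => (j == i)%:R) Ms Mp.
rewrite u0 mul0r bf_delta // => h.
have h2 : (\sum_j M i j * u j) ^+ 2 = 0 by apply/le_anti; rewrite h sqr_ge0.
by move/eqP: h2; rewrite expf_eq0 /= => /eqP.
Qed.

Lemma bf_mx (R : realType) n (M : 'M[R]_n) (u v : 'I_n -> R) :
  bf M u v = ((\col_i u i)^T *m M *m (\col_i v i)) 0 0.
Proof.
rewrite /bf mxE exchange_big; apply: eq_bigr => j _.
rewrite !mxE mulr_suml; apply: eq_bigr => i _; by rewrite !mxE.
Qed.

Definition norm2 (R : realType) (I : finType) (w : I -> R) := \sum_i w i ^+ 2.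

Lemma norm2_ge0 (R : realType) (I : finType) (w : I -> R) : 0 <= norm2 w.
Proof. by apply: sumr_ge0 => i _; rewrite sqr_ge0. Qed.

Lemma sq_le_norm2 (R : realType) (I : finType) (w : I -> R) i : w i ^+ 2 <= norm2 w.
Proof.
rewrite /norm2 (bigD1 i) //= lerDl; apply: sumr_ge0 => j _; exact: sqr_ge0.
Qed.

Lemma bf_bound (R : realType) (I : finType) (M : I -> I -> R) w :
  `|bf M w w| <= (\sum_i \sum_j `|M i j|) * norm2 w.
Proof.
rewrite /bf mulr_suml; apply: le_trans (ler_norm_sum _ _ _) _.
apply: ler_sum => i _; rewrite mulr_suml; apply: le_trans (ler_norm_sum _ _ _) _.
apply: ler_sum => j _.
rewrite mulrAC normrM [X in _ <= X]mulrC ler_wpM2r //.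
rewrite normrM; have hi := sq_le_norm2 w i; have hj := sq_le_norm2 w j.
rewrite -(real_normK (num_real (w i))) in hi.
rewrite -(real_normK (num_real (w j))) in hj.
have h := sqr_ge0 (`|w i| - `|w j|); rewrite sqrrB in h.
lra.
Qed.

Lemma psd_perturb (R : realType) n (A C : 'M[R]_n) :
  (forall i j, A i j = A j i) -> (forall i j, C i j = C j i) ->
  (forall x, 0 <= bf A x x) ->
  (forall v : 'cV_n, A *m v = 0 -> C *m v = 0) ->
  exists K, forall x, - (K * bf A x x) <= bf C x x.
Proof.
move=> As Cs Ap AC.
have AT : A^T = A by apply/matrixP => i j; rewrite mxE As.
have CT : C^T = C by apply/matrixP => i j; rewrite mxE Cs.
have sCA : (C <= A)%MS.
  rewrite submxE; apply/eqP/matrixP => i j.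
  have h0 : A *m col j (cokermx A) = 0 by rewrite colE mulmxA mulmx_coker mul0mx.
  move/(_ _ h0)/matrixP/(_ i 0): AC; rewrite colE mulmxA [in X in X -> _]mxE => h.
  rewrite [RHS]mxE; rewrite mxE in h; rewrite -h (bigD1 j) //=.
  rewrite [delta_mx j 0 j 0]mxE !eqxx mulr1 big1 ?addr0 // => k kj.
  rewrite [delta_mx j 0 k 0]mxE (_ : (k == j) = false); first by rewrite mulr0.
  exact/negbTE.
set E := (C *m pinvmx A)^T *m pinvmx A.
have eC : C = A *m E *m A.
  have h1 := mulmxKpV sCA.
  have h2 : C = A *m (C *m pinvmx A)^T.
    by rewrite -{1}CT -{1}h1 trmx_mul AT.
  by rewrite -{1}h1 {1}h2 /E !mulmxA.
set kE := \sum_i \sum_j `|E i j|.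
set kA := \sum_i \sum_j `|A i j|.
have kE0 : 0 <= kE by apply: sumr_ge0 => i _; apply: sumr_ge0 => j _; exact: normr_ge0.
have kA0 : 0 <= kA by apply: sumr_ge0 => i _; apply: sumr_ge0 => j _; exact: normr_ge0.
exists (kE * kA) => x.
set xv := \col_i x i.
set wv := A *m xv.
set w := fun i => wv i 0.
have colw : \col_i w i = wv.
  by apply/matrixP => i j; rewrite mxE (ord1 j).
have e1 : bf C x x = bf E w w.
  rewrite !bf_mx colw -/xv eC !mulmxA.
  by rewrite -[xv^T *m A]trmxK trmx_mul trmxK AT.
have e2 : bf A x w = norm2 w.
  rewrite bf_mx colw -/xv /norm2 -/wv.
  have -> : xv^T *m A = wv^T by rewrite trmx_mul AT.
  rewrite mxE; apply: eq_bigr => i _; by rewrite [wv^T 0 i]mxE expr2.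
have cs := bf_cs x w As Ap.
rewrite e2 in cs.
have hb := bf_bound A w.
have hbA : bf A w w <= kA * norm2 w by apply: le_trans (ler_norm _) hb.
have hbE := bf_bound E w; rewrite -/kE in hbE.
have n0 := norm2_ge0 w.
have q0 := Ap x.
have hn : norm2 w <= kA * bf A x x.
  have [n_0|np] := eqVneq (norm2 w) 0; first by rewrite n_0 mulr_ge0.
  have npos : 0 < norm2 w by rewrite lt_def np n0.
  have h3 : norm2 w ^+ 2 <= (kA * bf A x x) * norm2 w.
    suff -> : kA * bf A x x * norm2 w = bf A x x * (kA * norm2 w).
      exact: le_trans cs (ler_wpM2l q0 hbA).
    by rewrite mulrCA mulrA.
  rewrite expr2 in h3; by rewrite -(ler_pM2r npos).
rewrite e1.
have := hbE; rewrite ler_norml => /andP[+ _].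
have : kE * norm2 w <= kE * (kA * bf A x x) by rewrite ler_wpM2l.
move=> h4 h5; rewrite mulrA in h4; lra.
Qed.

Lemma sum_V (R : zmodType) (T : finType) (V : {set T}) (F : T -> R) :
  (forall i, i \notin V -> F i = 0) -> \sum_i F i = \sum_(a < #|V|) F (vtx a).
Proof.
move=> F0; rewrite /vtx -big_enum_val [RHS]big_mkcond.
by apply: eq_bigr => i _; case: ifP => // /negbT /F0.
Qed.

Definition aff (R : realType) (T : finType) (d : nat) (a : R) (b : 'rV[R]_d)
  (p : T -> 'rV[R]_d) (i : T) : R := a + \sum_k b 0 k * p i 0 k.

Definition Wm (R : realType) (T : finType) (d : nat) (V : {set T})
  (p : T -> 'rV[R]_d) : 'M[R]_(1 + d, #|V|) :=
  col_mx (const_mx 1) (\matrix_(k, a) p (vtx a) 0 k).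

Lemma Wm_mul (R : realType) (T : finType) (d : nat) (V : {set T})
  (p : T -> 'rV[R]_d) (c : 'rV_(1 + d)) a :
  (c *m Wm V p) 0 a = aff (lsubmx c 0 0) (rsubmx c) p (vtx a).
Proof.
rewrite -{1}[c]hsubmxK /Wm mul_row_col !mxE big_ord1 !mxE mulr1 /aff.
congr (_ + _); apply: eq_bigr => k _; by rewrite !mxE.
Qed.

Lemma Wm_stress (R : realType) (T : finType) (d : nat) (V : {set T})
  (E : {set {set T}}) (p : T -> 'rV[R]_d) (Om : 'M_#|V|) :
  stress_matrix E p Om -> Wm V p *m Om = 0.
Proof.
case=> Os _ Or Oe; rewrite /Wm mul_col_mx.
have -> : (const_mx 1 : 'M[R]_(1, #|V|)) *m Om = 0.
  apply/matrixP => i j; rewrite !mxE; transitivity (\sum_a Om j a); last exact: Or.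
  apply: eq_bigr => a _.
  by rewrite mxE mul1r Os.
have -> : \matrix_(k, a) p (vtx a) 0 k *m Om = 0.
  apply/matrixP => k j; rewrite !mxE.
  transitivity ((\sum_a Om j a *: p (vtx a)) 0 k); last by rewrite Oe mxE.
  rewrite summxE; apply: eq_bigr => a _; by rewrite !mxE Os mulrC.
by rewrite col_mx0.
Qed.

Lemma aff_unique (R : realType) (T : finType) (d : nat) (S : {set T})
  (p : T -> 'rV[R]_d) a b :
  #|S| = d.+1 -> aff_indep p S -> (forall i, i \in S -> aff a b p i = 0) ->
  a = 0 /\ b = 0.
Proof.
move=> cS ind h.
have [x0 x0S] : exists x0, x0 \in S by apply/card_gt0P; rewrite cS.
pose MS : 'M[R]_(#|S|, 1 + d) :=
  row_mx (const_mx 1) (\matrix_(s, k) p (enum_val s) 0 k).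
have fMS : row_free MS.
  apply: inj_row_free => v; rewrite mul_mx_row => /eqP; rewrite row_mx_eq0.
  case/andP => /eqP h1 /eqP h2.
  pose lam := fun i => v 0 (enum_rank_in x0S i).
  have s1 : \sum_(i in S) lam i = 0.
    rewrite big_enum_val; transitivity ((v *m (const_mx 1 : 'M[R]_(#|S|, 1))) 0 0); last by rewrite h1 mxE.
    rewrite mxE; apply: eq_bigr => s _; by rewrite /lam enum_valK_in mxE mulr1.
  have s2 : \sum_(i in S) lam i *: p i = 0.
    apply/matrixP => z k; rewrite (ord1 z) summxE [RHS]mxE big_enum_val.
    transitivity ((v *m \matrix_(s, k) p (enum_val s) 0 k) 0 k); last by rewrite h2 mxE.
    rewrite mxE; apply: eq_bigr => s _; by rewrite /lam enum_valK_in !mxE.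
  apply/matrixP => z s; rewrite (ord1 z) mxE.
  have := ind lam s1 s2 (enum_val s) (enum_valP s).
  by rewrite /lam enum_valK_in.
have fMST : row_free MS^T.
  by rewrite /row_free mxrank_tr; move/eqP: fMS => ->; rewrite cS.
pose c : 'rV[R]_(1 + d) := row_mx (const_mx a) b.
have c0 : c *m MS^T = 0.
  apply/matrixP => z s; rewrite (ord1 z) -[c *m _]trmxK trmx_mul trmxK.
  rewrite mxE /MS /c tr_row_mx mul_row_col !mxE big_ord1 !mxE mul1r.
  rewrite -[RHS](h (enum_val s) (enum_valP s)) /aff; congr (_ + _).
  apply: eq_bigr => k _; by rewrite !mxE mulrC.
move/eqP: c0; rewrite (mulmx_free_eq0 _ fMST) /c row_mx_eq0 => /andP[/eqP ha /eqP ->].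
split => //; have := congr1 (fun M : 'M_1 => M 0 0) ha; by rewrite !mxE.
Qed.

Lemma Wm_free (R : realType) (T : finType) (d : nat) (V S : {set T})
  (p : T -> 'rV[R]_d) :
  S \subset V -> #|S| = d.+1 -> aff_indep p S -> row_free (Wm V p).
Proof.
move=> SV cS ind.
have [x0 x0S] : exists x0, x0 \in S by apply/card_gt0P; rewrite cS.
have x0V : x0 \in V := subsetP SV _ x0S.
apply: inj_row_free => c c0.
have := @aff_unique R T d S p (lsubmx c 0 0) (rsubmx c) cS ind.
case.
  move=> i iS; have iV := subsetP SV _ iS.
  have := Wm_mul p c (enum_rank_in x0V i); rewrite c0 mxE.
  by rewrite /vtx enum_rankK_in.
move=> hl hr; rewrite -[c]hsubmxK hr.
have -> : lsubmx c = 0 by apply/matrixP => z w; rewrite (ord1 z) (ord1 w) hl mxE.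
by rewrite row_mx0.
Qed.

Lemma KC (R : realType) (T : finType) (d : nat) (V S : {set T})
  (E : {set {set T}}) (p : T -> 'rV[R]_d) (Om : 'M_#|V|) :
  stress_matrix E p Om -> nullity Om = d.+1 ->
  S \subset V -> #|S| = d.+1 -> aff_indep p S ->
  forall z : 'rV_#|V|, z *m Om = 0 ->
  exists a b, forall c, z 0 c = aff a b p (vtx c).
Proof.
move=> st nul SV cS ind z zO.
have hsub : (Wm V p <= kermx Om)%MS by apply/sub_kermxP; exact: Wm_stress st.
have rW : \rank (Wm V p) = d.+1 by apply/eqP; exact: Wm_free SV cS ind.
have heq := (mxrank_leqif_eq hsub).2.
rewrite /nullity in nul; rewrite rW nul eqxx in heq.
have zk : (z <= kermx Om)%MS by apply/sub_kermxP.
have zW : (z <= Wm V p)%MS.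
  apply: submx_trans zk _; by move: heq => /esym /andP[].
case/submxP: zW => D ->.
exists (lsubmx D 0 0), (rsubmx D) => c; exact: Wm_mul.
Qed.

Definition fstress (R : realType) (T : finType) (d : nat) (V : {set T})
  (E : {set {set T}}) (p : T -> 'rV[R]_d) (w : T -> T -> R) : Prop :=
  [/\ forall i j, w i j = w j i,
      forall i j, i \notin V -> w i j = 0,
      forall i j, i != j -> [set i; j] \notin E -> w i j = 0,
      forall i, \sum_j w i j = 0 &
      forall i, \sum_j w i j *: p j = 0].

Lemma bf_tr (R : realType) (T : finType) (V : {set T}) (w : T -> T -> R) x y :
  (forall i j, w i j = w j i) -> (forall i j, i \notin V -> w i j = 0) ->
  bf w x y = bf (\matrix_(a, b) w (vtx a) (vtx b) : 'M_#|V|)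
                (fun a => x (vtx a)) (fun a => y (vtx a)).
Proof.
move=> ws w0; rewrite /bf (sum_V (V := V)) => [|i iV]; last first.
  by apply: big1 => j _; rewrite w0 // mulr0 mul0r.
apply: eq_bigr => a _; rewrite (sum_V (V := V)) => [|j jV]; last first.
  by rewrite ws w0 // mulr0 mul0r.
by apply: eq_bigr => b _; rewrite mxE.
Qed.

Lemma stress_aff (R : realType) (T : finType) (d : nat) (p : T -> 'rV[R]_d)
  (w : T -> T -> R) a b :
  (forall i, \sum_j w i j = 0) -> (forall i, \sum_j w i j *: p j = 0) ->
  forall i, \sum_j w i j * aff a b p j = 0.
Proof.
move=> w1 w2 i; rewrite /aff.
transitivity (a * \sum_j w i j + \sum_k b 0 k * (\sum_j w i j *: p j) 0 k).
  rewrite mulr_sumr.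
  under [X in _ = _ + X]eq_bigr => k _ do rewrite summxE mulr_sumr.
  rewrite exchange_big -big_split; apply: eq_bigr => j _ /=.
  rewrite mulrDr mulr_sumr; congr (_ + _); first by rewrite mulrC.
  by apply: eq_bigr => k _; rewrite mxE; ring.
by rewrite w1 w2 mulr0 add0r big1 // => k _; rewrite mxE mulr0.
Qed.

Lemma in_stress (R : realType) (T : finType) (d : nat) (V S : {set T})
  (E : {set {set T}}) (p : T -> 'rV[R]_d) (Om : 'M_#|V|) :
  stress_matrix E p Om -> psd Om -> nullity Om = d.+1 ->
  S \subset V -> #|S| = d.+1 -> aff_indep p S ->
  exists w : T -> T -> R,
   [/\ fstress V E p w, (forall x, 0 <= bf w x x),
       (forall x, (forall i, \sum_j w i j * x j = 0) ->
          exists a b, forall i, i \in V -> x i = aff a b p i) &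
       Om = \matrix_(a, b) w (vtx a) (vtx b)].
Proof.
move=> st ps nul SV cS ind.
have [x0 x0S] : exists x0, x0 \in S by apply/card_gt0P; rewrite cS.
have x0V : x0 \in V := subsetP SV _ x0S.
pose rk := enum_rank_in x0V.
pose w := fun i j => if (i \in V) && (j \in V) then Om (rk i) (rk j) else 0.
have wv : forall a b, w (vtx a) (vtx b) = Om a b.
  by move=> a b; rewrite /w /vtx !enum_valP /= /rk !enum_valK_in.
have vrk : forall i, i \in V -> vtx (rk i) = i by move=> i iV; rewrite /vtx enum_rankK_in.
have Omeq : Om = \matrix_(a, b) w (vtx a) (vtx b).
  by apply/matrixP => a b; rewrite mxE wv.
case: (st) => Os Oz Or Oe.
have ws : forall i j, w i j = w j i.
  by move=> i j; rewrite /w andbC; case: ifP => // _; rewrite Os.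
have w0 : forall i j, i \notin V -> w i j = 0 by move=> i j /negbTE; rewrite /w => ->.
exists w; split => //.
- split => //.
  + move=> i j ij nE; rewrite /w; case: ifP => // /andP[iV jV].
    apply: Oz; last by rewrite !vrk.
    apply: contra ij => /eqP h; apply/eqP.
    by rewrite -(vrk i iV) -(vrk j jV) h.
  + move=> i; case iV: (i \in V); last by apply: big1 => j _; rewrite w0 // iV.
    rewrite (sum_V (V := V)) => [|j jV]; last by rewrite ws w0.
    transitivity (\sum_a Om (rk i) a); last exact: Or.
    by apply: eq_bigr => a _; rewrite -wv vrk.
  + move=> i; case iV: (i \in V); last by apply: big1 => j _; rewrite w0 ?scale0r // iV.
    rewrite (sum_V (V := V)) => [|j jV]; last by rewrite ws w0 ?scale0r.
    transitivity (\sum_a Om (rk i) a *: p (vtx a)); last exact: Oe.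
    by apply: eq_bigr => a _; rewrite -wv vrk.
- move=> x; rewrite (bf_tr x x ws w0) -Omeq bf_mx; exact: ps.
- move=> x xk.
  have [a [b hab]] : exists a b, forall c : 'I_#|V|, (\row_(e < #|V|) x (vtx e)) 0 c = aff a b p (vtx c).
    apply: (@KC R T d V S E p Om st nul SV cS ind (\row_(e < #|V|) x (vtx e))); apply/matrixP => z c; rewrite (ord1 z) !mxE.
    transitivity (\sum_j w (vtx c) j * x j); last exact: xk.
    rewrite (sum_V (V := V)) => [|j jV]; last by rewrite ws w0 ?mul0r.
    by apply: eq_bigr => e _; rewrite mxE wv Os mulrC.
  exists a, b => i iV; have := hab (rk i); by rewrite mxE vrk.
Qed.

Lemma out_stress (R : realType) (T : finType) (d : nat) (V S : {set T})
  (E : {set {set T}}) (p : T -> 'rV[R]_d) (w : T -> T -> R) :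
  fstress V E p w -> (forall x, 0 <= bf w x x) ->
  (forall x, (forall i, \sum_j w i j * x j = 0) ->
          exists a b, forall i, i \in V -> x i = aff a b p i) ->
  S \subset V -> #|S| = d.+1 -> aff_indep p S ->
  has_psd_stress_nullity V E p d.+1.
Proof.
case=> ws w0 wE w1 w2 wp wk SV cS ind.
have [x0 x0S] : exists x0, x0 \in S by apply/card_gt0P; rewrite cS.
have x0V : x0 \in V := subsetP SV _ x0S.
pose rk := enum_rank_in x0V.
have vrk : forall i, i \in V -> vtx (rk i) = i by move=> i iV; rewrite /vtx enum_rankK_in.
have rkv : forall a, rk (vtx a) = a by move=> a; rewrite /rk /vtx enum_valK_in.
have vV : forall a : 'I_#|V|, vtx a \in V by move=> a; exact: enum_valP.
have w0' : forall i j, j \notin V -> w i j = 0 by move=> i j jV; rewrite ws w0.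
pose Om : 'M[R]_#|V| := \matrix_(a, b) w (vtx a) (vtx b).
have st : stress_matrix E p Om.
  split.
  - by move=> i j; rewrite !mxE ws.
  - move=> i j ij; rewrite mxE; apply: wE.
    by apply: contra ij => /eqP /enum_val_inj ->.
  - move=> i; transitivity (\sum_j w (vtx i) j); last exact: w1.
    rewrite (sum_V (V := V)) => [|j jV]; last exact: w0'.
    by apply: eq_bigr => b _; rewrite mxE.
  - move=> i; transitivity (\sum_j w (vtx i) j *: p j); last exact: w2.
    rewrite (sum_V (V := V)) => [|j jV]; last by rewrite w0' ?scale0r.
    by apply: eq_bigr => b _; rewrite mxE.
exists Om; split => //.
- move=> x.
  pose y := fun i => if i \in V then x (rk i) 0 else 0.
  have -> : x = \col_a y (vtx a).
    by apply/matrixP => a z; rewrite (ord1 z) mxE /y vV rkv.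
  rewrite -bf_mx -(bf_tr y y ws w0); exact: wp.
- have hsub : (Wm V p <= kermx Om)%MS by apply/sub_kermxP; exact: Wm_stress st.
  have rW : \rank (Wm V p) = d.+1 by apply/eqP; exact: Wm_free SV cS ind.
  have hsub2 : (kermx Om <= Wm V p)%MS.
    apply/row_subP => r; set z := row r (kermx Om).
    have zO : z *m Om = 0 by rewrite /z -row_mul mulmx_ker row0.
    pose x := fun i => if i \in V then z 0 (rk i) else 0.
    have xk : forall i, \sum_j w i j * x j = 0.
      move=> i; case iV: (i \in V); last by apply: big1 => j _; rewrite w0 ?mul0r // iV.
      rewrite (sum_V (V := V)) => [|j jV]; last by rewrite w0' ?mul0r.
      transitivity ((z *m Om) 0 (rk i)); last by rewrite zO mxE.
      rewrite mxE; apply: eq_bigr => e _.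
      by rewrite /x vV rkv /z [row _ _ _ _]mxE /Om [(\matrix_(_, _) _) _ _]mxE (vrk _ iV) ws mulrC.
    have [a [b hab]] := wk x xk.
    have -> : z = row_mx (const_mx a) b *m Wm V p.
      apply/matrixP => o c; rewrite (ord1 o) Wm_mul row_mxKl row_mxKr mxE.
      have := hab (vtx c) (vV c); rewrite /x vV rkv /z [row _ _ _ _]mxE => ->.
      by rewrite mxE.
    exact: submxMl.
  rewrite /nullity; apply/eqP; rewrite -rW eqn_leq mxrankS //= mxrankS //.
Qed.

Definition sv (T : finType) (x0 : T) (S : {set T}) (a : nat) : T := nth x0 (enum S) a.

Lemma sv_in (T : finType) (x0 : T) (S : {set T}) d (a : 'I_d.+1) :
  #|S| = d.+1 -> sv x0 S a \in S.
Proof. by move=> cS; rewrite /sv -mem_enum mem_nth // -cardE cS. Qed.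

Lemma sum_sv (R : zmodType) (T : finType) (x0 : T) (S : {set T}) d (F : T -> R) :
  #|S| = d.+1 -> \sum_(i in S) F i = \sum_(a < d.+1) F (sv x0 S a).
Proof.
move=> cS; rewrite -big_enum (big_nth x0) -cardE cS big_mkord.
by apply: eq_bigr.
Qed.

Lemma sv_index (T : finType) (x0 : T) (S : {set T}) d i :
  #|S| = d.+1 -> i \in S -> sv x0 S (@inord d (index i (enum S))) = i.
Proof.
move=> cS iS; rewrite /sv inordK ?nth_index ?mem_enum //.
by rewrite -cS cardE index_mem mem_enum.
Qed.

Lemma index_sv (T : finType) (x0 : T) (S : {set T}) d (a : 'I_d.+1) :
  #|S| = d.+1 -> @inord d (index (sv x0 S a) (enum S)) = a.
Proof.
move=> cS; apply/val_inj => /=; rewrite /sv index_uniq ?enum_uniq ?inordK //.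
by rewrite -cardE cS.
Qed.

Definition Sq (R : realType) (T : finType) (d : nat) (x0 : T) (S : {set T})
  (p : T -> 'rV[R]_d) : 'M[R]_(d.+1, 1 + d) :=
  row_mx (const_mx 1) (\matrix_(a, k) p (sv x0 S a) 0 k).

Lemma Sq_free (R : realType) (T : finType) (d : nat) (x0 : T) (S : {set T})
  (p : T -> 'rV[R]_d) :
  #|S| = d.+1 -> aff_indep p S <-> row_free (Sq x0 S p).
Proof.
move=> cS; split.
  move=> ind; apply: inj_row_free => v; rewrite mul_mx_row => /eqP; rewrite row_mx_eq0.
  case/andP => /eqP h1 /eqP h2.
  pose lam := fun i => v 0 (@inord d (index i (enum S))).
  have s1 : \sum_(i in S) lam i = 0.
    rewrite (sum_sv x0 _ cS).
    transitivity ((v *m (const_mx 1 : 'M[R]_(d.+1, 1))) 0 0); last by rewrite h1 mxE.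
    rewrite mxE; apply: eq_bigr => s _; by rewrite /lam index_sv // mxE mulr1.
  have s2 : \sum_(i in S) lam i *: p i = 0.
    apply/matrixP => z k; rewrite (ord1 z) summxE [RHS]mxE (sum_sv x0 _ cS).
    transitivity ((v *m \matrix_(s, k) p (sv x0 S s) 0 k) 0 k); last by rewrite h2 mxE.
    rewrite mxE; apply: eq_bigr => s _; by rewrite /lam index_sv // !mxE.
  apply/matrixP => z s; rewrite (ord1 z) mxE.
  have := ind lam s1 s2 (sv x0 S s) (sv_in x0 s cS).
  by rewrite /lam index_sv.
move=> fr lam s1 s2.
pose v := \row_(a < d.+1) lam (sv x0 S a).
have v0 : v = 0.
  apply/eqP; rewrite -(mulmx_free_eq0 _ fr) mul_mx_row row_mx_eq0.
  apply/andP; split; apply/eqP/matrixP => z k; rewrite (ord1 z) !mxE.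
    rewrite -[RHS]s1 (sum_sv x0 _ cS); apply: eq_bigr => a _; by rewrite !mxE mulr1.
  transitivity ((\sum_(i in S) lam i *: p i) 0 k); last by rewrite s2 mxE.
  rewrite summxE (sum_sv x0 _ cS); apply: eq_bigr => a _; by rewrite !mxE.
move=> i iS; have := congr1 (fun M : 'rV_d.+1 => M 0 (@inord d (index i (enum S)))) v0.
by rewrite /= !mxE sv_index.
Qed.

Lemma exists_nonroot (R : realType) (q : {poly R}) : q != 0 ->
  exists i : nat, ~~ root q i%:R.
Proof.
move=> q0; set rs := [seq i%:R | i <- iota 0 (size q)] : seq R.
case: (boolP (all (root q) rs)) => [allr|].
  have uq : uniq rs.
    rewrite map_inj_uniq ?iota_uniq // => i j /eqP; rewrite eqr_nat => /eqP.
    done.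
  by have := max_poly_roots q0 allr uq; rewrite size_map size_iota ltnn.
case/allPn => x /mapP [i _ ->] hi; by exists i.
Qed.

Lemma Sq_lin (R : realType) (T : finType) (d : nat) (x0 : T) (S : {set T})
  (p u : T -> 'rV[R]_d) e :
  Sq x0 S (fun i => p i + e *: u i) =
  Sq x0 S p + e *: (Sq x0 S u - Sq x0 S (fun=> 0)).
Proof.
apply/matrixP => a k; rewrite !mxE; case: splitP => j _; rewrite !mxE; ring.
Qed.

Definition PM (R : realType) (T : finType) (d : nat) (x0 : T) (S : {set T})
  (p u : T -> 'rV[R]_d) : 'M[{poly R}]_(d.+1) :=
  \matrix_(a, k) ((Sq x0 S p a k)%:P +
                  'X * ((Sq x0 S u - Sq x0 S (fun=> 0)) a k)%:P).

Lemma PM_eval (R : realType) (T : finType) (d : nat) (x0 : T) (S : {set T})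
  (p u : T -> 'rV[R]_d) e :
  (\det (PM x0 S p u)).[e] = \det (Sq x0 S (fun i => p i + e *: u i)).
Proof.
rewrite -horner_evalE -det_map_mx Sq_lin; congr (\det _).
apply/matrixP => a k; rewrite !mxE /=; case: splitP => j _; by rewrite !mxE /= horner_evalE hornerD hornerC hornerM hornerX hornerC.
Qed.

Lemma Sq_0 (R : realType) (T : finType) (d : nat) (x0 : T) (S : {set T})
  (p u : T -> 'rV[R]_d) :
  Sq x0 S (fun i => p i + 0 *: u i) = Sq x0 S p.
Proof. by rewrite /Sq; congr row_mx; apply/matrixP => a k; rewrite !mxE mul0r addr0. Qed.

Lemma eps_gp (R : realType) (T : finType) (d : nat) (x0 : T) (V : {set T})
  (p u : T -> 'rV[R]_d) :
  general_position V p ->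
  exists e : R, e != 0 /\ general_position V (fun i => p i + e *: u i).
Proof.
move=> gp.
pose P := fun S : {set T} => (S \subset V) && (#|S| == d.+1).
set Q := 'X * \prod_(S | P S) \det (PM x0 S p u).
have dne : forall S, P S -> \det (PM x0 S p u) != 0.
  move=> S /andP[SV /eqP cS]; apply/eqP => h.
  have := congr1 (fun q => q.[0]) h; rewrite /= PM_eval horner0 Sq_0 => /eqP.
  apply/negP; rewrite -unitfE -unitmxE -row_free_unit.
  by apply/(Sq_free x0 _ cS); apply: gp.
have Q0 : Q != 0 by rewrite mulf_neq0 ?polyX_eq0 //; apply/prodf_neq0.
have [i hi] := exists_nonroot Q0.
exists i%:R; split.
  by apply: contraNneq hi => ->; rewrite /root /Q hornerM hornerX mul0r.
move=> S SV cS; apply/(Sq_free x0 _ cS).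
rewrite row_free_unit unitmxE unitfE -PM_eval.
move: hi; rewrite /root /Q hornerM horner_prod mulf_eq0 negb_or => /andP[_].
by move/prodf_neq0 => /(_ S); apply; rewrite /P SV cS eqxx.
Qed.

Definition fl (R : realType) (T : finType) (d : nat) (p u : T -> 'rV[R]_d) i j :=
  \sum_k (p i 0 k - p j 0 k) * (u i 0 k - u j 0 k).

Lemma inf_rigid (R : realType) (T : finType) (d : nat) (x0 : T) (V : {set T})
  (E : {set {set T}}) (p u : T -> 'rV[R]_d) :
  univ_rigid_graph R d V E -> general_position V p ->
  (forall i j, i \in V -> j \in V -> [set i; j] \in E -> fl p u i j = 0) ->
  forall i j, i \in V -> j \in V -> fl p u i j = 0.
Proof.
move=> ur gp hE i j iV jV.
have [e [e0 gpe]] := eps_gp x0 u gp.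
have key : forall a b, sqdist (p a - e *: u a) (p b - e *: u b) =
    sqdist (p a + e *: u a) (p b + e *: u b) - (e * 4) * fl p u a b.
  move=> a b; rewrite /sqdist /fl mulr_sumr -sumrB; apply: eq_bigr => k _.
  rewrite !mxE; ring.
have := ur _ gpe d (fun a => p a - e *: u a) (leqnn d).
have h1 : forall a b, a \in V -> b \in V -> [set a; b] \in E ->
   sqdist (p a - e *: u a) (p b - e *: u b) = sqdist (p a + e *: u a) (p b + e *: u b).
  by move=> a b aV bV ab; rewrite key hE // mulr0 subr0.
move=> /(_ h1 i j iV jV); rewrite key.
set c := e * 4 * fl p u i j => h.
have c0 : c = 0 by lra.
move/eqP: c0; rewrite /c !mulf_eq0 (negbTE e0) /= pnatr_eq0 /= => /eqP; done.
Qed.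

Definition Mab (R : realType) (T : finType) (d : nat) (p : T -> 'rV[R]_d) (a b : T)
  : 'M[R]_(#|T|, d) :=
  \matrix_(i, k) (((enum_val i == a)%:R - (enum_val i == b)%:R) * (p a 0 k - p b 0 k)).

Definition rr (R : realType) (T : finType) (d : nat) (p : T -> 'rV[R]_d) (a b : T)
  : 'rV[R]_(#|T| * d) := mxvec (Mab p a b).

Definition mo (R : realType) (T : finType) (d m : nat) (K : 'M[R]_(#|T| * d, m)) j
  : T -> 'rV[R]_d := fun i => \row_k K (mxvec_index (enum_rank i) k) j.

Lemma sum_ev (R : realType) (T : finType) (F : 'I_#|T| -> R) (c : R) (a : T) :
  \sum_i (enum_val i == a)%:R * c * F i = c * F (enum_rank a).
Proof.
rewrite (bigD1 (enum_rank a)) //= enum_rankK eqxx mul1r big1 ?addr0 // => i ia.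
have /negbTE -> : enum_val i != a.
  by apply: contra ia => /eqP <-; rewrite enum_valK.
by rewrite !mul0r.
Qed.

Lemma rrK (R : realType) (T : finType) (d m : nat) (p : T -> 'rV[R]_d) a b
  (K : 'M[R]_(#|T| * d, m)) j :
  (rr p a b *m K) 0 j = fl p (mo K j) a b.
Proof.
transitivity (\sum_i \sum_k Mab p a b i k * K (mxvec_index i k) j).
  rewrite pair_bigA mxE (reindex _ (curry_mxvec_bij _ _)) /=.
  by apply: eq_bigr => [[i k]] _; rewrite mxvecE.
rewrite exchange_big /fl; apply: eq_bigr => k _.
under eq_bigr => i _ do rewrite mxE mulrBl mulrBl.
rewrite sumrB !sum_ev !mxE; ring.
Qed.

Lemma dual (R : realType) (T : finType) (d : nat) (V : {set T})
  (E : {set {set T}}) (p : T -> 'rV[R]_d) (w : T -> T -> R) :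
  (forall u, (forall i j, i \in V -> j \in V -> [set i; j] \in E -> fl p u i j = 0) ->
     forall i j, i \in V -> j \in V -> fl p u i j = 0) ->
  (forall i j, i \notin V -> w i j = 0) -> (forall i j, j \notin V -> w i j = 0) ->
  exists nu : T -> T -> R,
    (forall i j, [set i; j] \notin E -> nu i j = w i j) /\
    (forall i, \sum_j (nu i j + nu j i) *: (p i - p j) = 0).
Proof.
move=> INF wl wr.
pose Rm : 'M[R]_(#|{: T * T}|, #|T| * d) := \matrix_(y, x)
  (if [set (enum_val y).1; (enum_val y).2] \in E
   then rr p (enum_val y).1 (enum_val y).2 0 x else 0).
set K := cokermx Rm.
have RK : Rm *m K = 0 := mulmx_coker Rm.
have edgeK : forall a b, [set a; b] \in E -> forall j, fl p (mo K j) a b = 0.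
  move=> a b ab j; rewrite -rrK.
  have <- : row (enum_rank (a, b)) Rm = rr p a b.
    by apply/rowP => x; rewrite !mxE enum_rankK /= ab.
  by rewrite -row_mul RK row0 mxE.
have allK : forall a b, a \in V -> b \in V -> forall j, fl p (mo K j) a b = 0.
  move=> a b aV bV j; apply: INF => // i l _ _ e; exact: edgeK e j.
pose r := \sum_(ab : T * T) w ab.1 ab.2 *: rr p ab.1 ab.2.
have rK : r *m K = 0.
  apply/matrixP => z j; rewrite (ord1 z) mulmx_suml summxE [RHS]mxE.
  apply: big1 => -[a b] _ /=; rewrite -scalemxAl mxE rrK.
  case aV: (a \in V); last by rewrite wl ?mul0r // aV.
  case bV: (b \in V); last by rewrite wr ?mul0r // bV.
  by rewrite allK ?mulr0.
have sr : (r <= Rm)%MS by rewrite submxE -/K rK.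
case/submxP: sr => D rD.
pose mu := fun a b => if [set a; b] \in E then D 0 (enum_rank (a, b)) else 0.
have DR : D *m Rm = \sum_(ab : T * T) mu ab.1 ab.2 *: rr p ab.1 ab.2.
  apply/rowP => x; rewrite mxE summxE.
  rewrite (reindex enum_rank (onW_bij _ (enum_rank_bij _))) /=.
  apply: eq_bigr => -[a b] _; rewrite !mxE enum_rankK /mu /=.
  by case: ifP => _; rewrite ?mulr0 ?mul0r.
pose nu := fun a b => w a b - mu a b.
have S0 : \sum_(ab : T * T) nu ab.1 ab.2 *: rr p ab.1 ab.2 = 0.
  under eq_bigr do rewrite scalerBl.
  by rewrite sumrB -DR -rD /r subrr.
exists nu; split.
  by move=> i j ij; rewrite /nu /mu (negbTE ij) subr0.
move=> i; apply/rowP => k; rewrite summxE [RHS]mxE.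
transitivity (\sum_(ab : T * T)
   (nu ab.1 ab.2 *: rr p ab.1 ab.2) 0 (mxvec_index (enum_rank i) k)); last first.
  by rewrite -summxE S0 mxE.
under [RHS]eq_bigr => ab _ do rewrite mxE /rr mxvecE mxE enum_rankK.
rewrite -(pair_bigA _ (fun a b => nu a b *
   (((i == a)%:R - (i == b)%:R) * (p a 0 k - p b 0 k)))) /=.
transitivity (\sum_a (\sum_b nu a b * (p a 0 k - p b 0 k)) * (a == i)%:R -
   \sum_b (\sum_a nu a b * (p a 0 k - p b 0 k)) * (b == i)%:R).
  rewrite !sum_delta -sumrB; apply: eq_bigr => j _; rewrite !mxE; ring.
set F := fun a b => nu a b * (p a 0 k - p b 0 k).
have eA : \sum_a (\sum_b F a b) * (a == i)%:R = \sum_a \sum_b F a b * (a == i)%:R.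
  by apply: eq_bigr => a _; rewrite mulr_suml.
have eB : \sum_b (\sum_a F a b) * (b == i)%:R = \sum_a \sum_b F a b * (b == i)%:R.
  rewrite exchange_big /=; apply: eq_bigr => b _; by rewrite mulr_suml.
rewrite eA eB -sumrB; apply: eq_bigr => a _.
rewrite -sumrB; apply: eq_bigr => b _; rewrite /F.
rewrite [i == a]eq_sym [i == b]eq_sym; ring.
Qed.

Lemma ex_subset (T : finType) (X : {set T}) n :
  (n <= #|X|)%N -> exists S : {set T}, S \subset X /\ #|S| = n.
Proof.
move=> nX; exists [set x in take n (enum X)]; split.
  by apply/subsetP => x; rewrite inE => /mem_take; rewrite mem_enum.
rewrite cardsE; move/card_uniqP: (take_uniq n (enum_uniq X)) => ->.
by rewrite size_takel // -cardE.
Qed.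

Lemma aff_indep_ext (R : realType) (T : finType) (d : nat) (S : {set T})
  (p q : T -> 'rV[R]_d) :
  (forall i, i \in S -> p i = q i) -> aff_indep p S -> aff_indep q S.
Proof.
move=> pq ind lam s1 s2; apply: ind => //.
transitivity (\sum_(i in S) lam i *: q i); last exact: s2.
by apply: eq_bigr => i iS; rewrite pq.
Qed.

Lemma bf_row (R : realType) (I : finType) (M : I -> I -> R) x :
  bf M x x = \sum_i x i * \sum_j M i j * x j.
Proof.
rewrite /bf; apply: eq_bigr => i _; rewrite mulr_sumr; apply: eq_bigr => j _; ring.
Qed.

Lemma bf_lin3 (R : realType) (I : finType) (M1 M2 M3 : I -> I -> R) (c : R) x :
  bf (fun i j => c * M1 i j + M2 i j + M3 i j) x x =
  c * bf M1 x x + bf M2 x x + bf M3 x x.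
Proof.
rewrite /bf mulr_sumr -!big_split; apply: eq_bigr => i _.
rewrite mulr_sumr -!big_split; apply: eq_bigr => j _ /=; ring.
Qed.

Lemma aff_sub (R : realType) (T : finType) (d : nat) a b a' b' (p : T -> 'rV[R]_d) i :
  aff a b p i - aff a' b' p i = aff (a - a') (b - b') p i.
Proof.
rewrite /aff opprD addrACA -sumrB; congr (_ + _); apply: eq_bigr => k _.
by rewrite !mxE mulrBl.
Qed.

Definition Cf (R : realType) (T : finType) (nu : T -> T -> R) (i j : T) : R :=
  (nu i j + nu j i) - (i == j)%:R * \sum_l (nu i l + nu l i).

Lemma sum_delta' (R : realType) (T : finType) (U : lmodType R) (i : T) (c : R) (f : T -> U) :
  \sum_j ((i == j)%:R * c) *: f j = c *: f i.
Proof.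
rewrite (bigD1 i) //= eqxx mul1r big1 ?addr0 // => j /negbTE.
by rewrite eq_sym => ->; rewrite mul0r scale0r.
Qed.

Lemma Cf_props (R : realType) (T : finType) (d : nat) (V : {set T})
  (p q : T -> 'rV[R]_d) (nu : T -> T -> R) :
  (forall i j, i \notin V -> nu i j = 0) -> (forall i j, j \notin V -> nu i j = 0) ->
  (forall i, \sum_j (nu i j + nu j i) *: (p i - p j) = 0) ->
  (forall j, j \in V -> q j = p j) ->
  [/\ (forall i j, Cf nu i j = Cf nu j i),
      (forall i j, i \notin V -> Cf nu i j = 0),
      (forall i j, i != j -> Cf nu i j = nu i j + nu j i),
      (forall i, \sum_j Cf nu i j = 0) &
      (forall i, \sum_j Cf nu i j *: q j = 0)].
Proof.
move=> nl nr eq qp.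
have om0 : forall i j, i \notin V -> nu i j + nu j i = 0.
  by move=> i j iV; rewrite (nl i j iV) (nr j i iV) addr0.
have om0' : forall i j, j \notin V -> nu i j + nu j i = 0.
  by move=> i j jV; rewrite (nr i j jV) (nl j i jV) addr0.
split.
- move=> i j; rewrite /Cf; case: (eqVneq i j) => [->|ij] //.
  by rewrite !mul0r !subr0 addrC.
- move=> i j iV; rewrite /Cf om0 // big1 ?mulr0 ?subr0 // => l _; exact: om0.
- move=> i j ij; rewrite /Cf (_ : (i == j) = false); last exact/negbTE.
  by rewrite mul0r subr0.
- move=> i; rewrite /Cf sumrB.
  have -> : \sum_j (i == j)%:R * \sum_l (nu i l + nu l i) = \sum_l (nu i l + nu l i).
    rewrite (bigD1 i) //= eqxx mul1r [X in _ + X = _]big1 ?addr0 // => j ji.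
    rewrite (_ : (i == j) = false) ?mul0r //; apply/negbTE; by rewrite eq_sym.
  by rewrite subrr.
- move=> i.
  have e0 : \sum_j (nu i j + nu j i) *: (q i - q j) = 0.
    case iV: (i \in V); last by apply: big1 => j _; rewrite om0 ?scale0r // iV.
    transitivity (\sum_j (nu i j + nu j i) *: (p i - p j)); last exact: eq.
    apply: eq_bigr => j _; case jV: (j \in V); first by rewrite !qp.
    by rewrite om0' ?scale0r // jV.
  transitivity (- \sum_j (nu i j + nu j i) *: (q i - q j)); last by rewrite e0 oppr0.
  rewrite /Cf; under eq_bigr => j _ do rewrite scalerBl.
  rewrite sumrB sum_delta' -sumrN scaler_suml -sumrB.
  by apply: eq_bigr => j _; rewrite scalerBr opprB.
Qed.

Unset Implicit Arguments.

Theorem theorem8 (R : realType) (T : finType) (d : nat)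
  (VA VB : {set T}) (EA EB : {set {set T}}) (pA pB : T -> 'rV[R]_d) :
  (1 <= d)%N ->
  is_graph VA EA -> is_graph VB EB ->
  univ_rigid_graph R d VA EA -> univ_rigid_graph R d VB EB ->
  general_position VA pA -> general_position VB pB ->
  (VA :&: VB) \proper VA -> (VA :&: VB) \proper VB ->
  (d.+1 <= #|VA :&: VB|)%N ->
  (forall i, i \in VA :&: VB -> pA i = pB i) ->
  has_psd_stress_nullity VA EA pA d.+1 ->
  has_psd_stress_nullity VB EB pB d.+1 ->
  has_psd_stress_nullity (VA :|: VB) (attach_edges VA VB EA EB)
    (attach_config VA pA pB) d.+1.
Proof.
move=> d1 gA gB urA urB gpA gpB _ _ cC agree [OA [stA psA nA]] [OB [stB psB nB]].
have [S [SC cS]] := ex_subset cC.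
have SA : S \subset VA by apply: subset_trans SC (subsetIl _ _).
have SB : S \subset VB by apply: subset_trans SC (subsetIr _ _).
have indA : aff_indep pA S by apply: gpA.
have indB : aff_indep pB S.
  by apply: aff_indep_ext indA => i iS; apply: agree; apply: (subsetP SC).
have [x0 x0S] : exists x0, x0 \in S by apply/card_gt0P; rewrite cS.
have x0A : x0 \in VA := subsetP SA _ x0S.
have [wA [[wAs wA0 wAE wA1 wA2] wAp wAk OAe]] := in_stress stA psA nA SA cS indA.
have [wB [[wBs wB0 wBE wB1 wB2] wBp wBk OBe]] := in_stress stB psB nB SB cS indB.
set p := attach_config VA pA pB.
have pA_ : forall i, i \in VA -> p i = pA i by move=> i iA; rewrite /p /attach_config iA.
have pB_ : forall i, i \in VB -> p i = pB i.
  move=> i iB; rewrite /p /attach_config; case: ifP => // iA.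
  by apply: agree; rewrite inE iA.
pose w := fun i j => if [set i; j] \in removed_edges VA VB EA EB then - wB i j / 2 else 0.
have remV : forall i j, [set i; j] \in removed_edges VA VB EA EB -> (i \in VA) && (j \in VA).
  move=> i j; rewrite inE => /andP[_ /andP[_ /subsetP sub]].
  have := sub i; have := sub j; rewrite !inE !eqxx orbT /= => /(_ isT) /andP[-> _].
  by move=> /(_ isT) /andP[-> _].
have wl : forall i j, i \notin VA -> w i j = 0.
  move=> i j iA; rewrite /w; case: ifP => // /remV /andP[iA' _].
  by rewrite iA' in iA.
have wr : forall i j, j \notin VA -> w i j = 0.
  move=> i j jA; rewrite /w; case: ifP => // /remV /andP[_ jA'].
  by rewrite jA' in jA.
have INF := fun u => @inf_rigid R T d x0 VA EA pA u urA gpA.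
have [nu [nuE nueq]] := dual INF wl wr.
have edgeA : forall i j, [set i; j] \in EA -> (i \in VA) && (j \in VA).
  move=> i j /gA [_ /subsetP sub].
  have := sub i; have := sub j; rewrite !inE !eqxx orbT /= => /(_ isT) -> /(_ isT) ->.
  done.
have nul : forall i j, i \notin VA -> nu i j = 0.
  move=> i j iA; rewrite nuE ?wl //; apply: contra iA => /edgeA /andP[] //.
have nur : forall i j, j \notin VA -> nu i j = 0.
  move=> i j jA; rewrite nuE ?wr //; apply: contra jA => /edgeA /andP[] //.
have [Cs C0 Coff C1 C2] := Cf_props nul nur nueq pA_.
have [_ _ _ _ C2A] := Cf_props (q := pA) nul nur nueq (fun j _ => erefl).
pose Cm : 'M[R]_#|VA| := \matrix_(a, b) Cf nu (vtx a) (vtx b).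
case: (stA) => OAs _ _ _.
have OApsd : forall y, 0 <= bf OA y y by move=> y; rewrite bf_mx; apply: psA.
have Cms : forall a b, Cm a b = Cm b a by move=> a b; rewrite !mxE Cs.
pose rk := enum_rank_in x0A.
have vrk : forall i, i \in VA -> vtx (rk i) = i by move=> i iA; rewrite /vtx enum_rankK_in.
have rkv : forall a, rk (vtx a) = a by move=> a; rewrite /rk /vtx enum_valK_in.
have vA : forall a : 'I_#|VA|, vtx a \in VA by move=> a; exact: enum_valP.
have hAC : forall v : 'cV_#|VA|, OA *m v = 0 -> Cm *m v = 0.
  move=> v Av.
  pose x := fun i => if i \in VA then v (rk i) 0 else 0.
  have xk : forall i, \sum_j wA i j * x j = 0.
    move=> i; case iA: (i \in VA); last by apply: big1 => j _; rewrite wA0 ?mul0r // iA.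
    rewrite (sum_V (V := VA)) => [|j jA]; last by rewrite wAs wA0 ?mul0r.
    transitivity ((OA *m v) (rk i) 0); last by rewrite Av mxE.
    rewrite mxE; apply: eq_bigr => a _.
    by rewrite OAe mxE (vrk _ iA) /x vA rkv.
  have [a [b hab]] := wAk x xk.
  apply/matrixP => c z; rewrite (ord1 z) [RHS]mxE mxE.
  transitivity (\sum_j Cf nu (vtx c) j * aff a b pA j); last exact: stress_aff C1 C2A _.
  rewrite (sum_V (V := VA) (F := fun j => Cf nu (vtx c) j * aff a b pA j)) => [|j jA]; last first.
    by rewrite Cs C0 ?mul0r.
  apply: eq_bigr => e _; rewrite mxE -hab ?vA //.
  by rewrite /x vA rkv.
have [K hK] := psd_perturb OAs Cms OApsd hAC.
have hKf : forall x, - (K * bf wA x x) <= bf (Cf nu) x x.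
  move=> x; rewrite (bf_tr x x wAs wA0) -OAe (bf_tr x x Cs C0); exact: hK.
have SV : S \subset VA :|: VB by apply: subset_trans SA (subsetUl _ _).
have indp : aff_indep p S.
  by apply: aff_indep_ext indA => i iS; rewrite pA_ // (subsetP SA).
pose om := fun i j => (K + 1) * wA i j + wB i j + Cf nu i j.
have wA0' : forall i j, j \notin VA -> wA i j = 0 by move=> i j jA; rewrite wAs wA0.
have wB0' : forall i j, j \notin VB -> wB i j = 0 by move=> i j jB; rewrite wBs wB0.
apply: (out_stress (S := S) (w := om)) => //.
- split.
  + by move=> i j; rewrite /om wAs wBs Cs.
  + move=> i j; rewrite inE negb_or => /andP[iA iB].
    by rewrite /om wA0 // wB0 // C0 // mulr0 !addr0.
  + move=> i j ij; rewrite /attach_edges in_setD negb_and negbK.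
    have sij : [set j; i] = [set i; j] by rewrite setUC.
    case rem: ([set i; j] \in removed_edges VA VB EA EB) => /= hE.
      have nEA : [set i; j] \notin EA by move: rem; rewrite inE => /andP[_ /andP[]].
      rewrite /om (wAE _ _ ij nEA) Coff // !nuE ?sij // /w sij rem wBs; by field.
    rewrite inE negb_or in hE; case/andP: hE => nEA nEB.
    rewrite /om (wAE _ _ ij nEA) (wBE _ _ ij nEB) Coff // !nuE ?sij // /w sij rem.
    by rewrite mulr0 !addr0.
  + by move=> i; rewrite /om big_split big_split /= -mulr_sumr wA1 wB1 C1 mulr0 !addr0.
  + move=> i; rewrite /om.
    under eq_bigr do rewrite scalerDl scalerDl -scalerA.
    rewrite big_split big_split /= -scaler_sumr C2.
    have -> : \sum_j wA i j *: p j = 0.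
      transitivity (\sum_j wA i j *: pA j); last exact: wA2.
      apply: eq_bigr => j _; case jA: (j \in VA); first by rewrite pA_.
      by rewrite wA0' ?scale0r // jA.
    have -> : \sum_j wB i j *: p j = 0.
      transitivity (\sum_j wB i j *: pB j); last exact: wB2.
      apply: eq_bigr => j _; case jB: (j \in VB); first by rewrite pB_.
      by rewrite wB0' ?scale0r // jB.
    by rewrite scaler0 !addr0.
- move=> x; rewrite /om bf_lin3.
  have := hKf x; have := wAp x; have := wBp x.
  rewrite mulrDl mul1r; set qA := bf wA x x; set t := K * qA; lra.
- move=> x xk.
  have q0 : bf om x x = 0 by rewrite bf_row big1 // => i _; rewrite xk mulr0.
  move: q0; rewrite /om bf_lin3 => q0.
  have := hKf x; have := wAp x; have := wBp x.
  rewrite mulrDl mul1r in q0; set qA := bf wA x x in q0 *; set t := K * qA in q0 *.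
  set qB := bf wB x x in q0 *; move=> hB hA hC.
  have qA0 : qA = 0 by lra.
  have qB0 : qB = 0 by lra.
  have [aA [bA hA']] := wAk x (bf_ker wAs wAp qA0).
  have [aB [bB hB']] := wBk x (bf_ker wBs wBp qB0).
  have [ea eb] : aA - aB = 0 /\ bA - bB = 0.
    apply: (aff_unique cS indA) => i iS.
    rewrite -aff_sub -hA' ?(subsetP SA) //.
    by rewrite hB' ?(subsetP SB) // /aff (agree i (subsetP SC i iS)) subrr.
  move/eqP: ea; rewrite subr_eq0 => /eqP ea; move/eqP: eb; rewrite subr_eq0 => /eqP eb.
  exists aA, bA => i; rewrite inE; case iA: (i \in VA) => /= iB.
    by rewrite hA' // /aff pA_.
  by rewrite hB' // /aff pB_ // ea eb.
Qed.
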